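(* There exists a combinatorial auction (with truthful bids) that admits a Walrasian equilibrium on the original items, but in which for every Walrasian equilibrium $(x^*,p)$ on the original items some winning bidder $i$ pays strictly more than her winning level, i.e. $p\,a^{i*}>w(\mathcal I\setminus i,c,\mathcal K)-w(\mathcal I\setminus i,c-a^{i*},\mathcal K)$. In this sense, minimal Walrasian equilibrium prices may be strictly greater than winning-level payments.
   Context: Combinatorial auction: item types $j\in\mathcal J$ with supply $c_j\in\mathbb Z_{\ge1}$ (vector $c$); bidders $\mathcal I$; finite set of bids $\mathcal K$, bid $k$ made by bidder $i(k)$ with bundle $a^k\in\mathbb Z^J_{\ge0}$, $a^k\le c$, amount $b_k\ge0$; $\mathcal K_i$ = bids of bidder $i$. Feasible allocation: $x\in\{0,1\}^K$ with $\sum_k a^kx_k\le c$ and at most one accepted bid per bidder. $w(\mathcal C,c',\mathcal K)$ = maximum total bid amount over feasible allocations with supply $c'$ using only bids of bidders in $\mathcal C$. $x^*$ efficient allocation; $a^{i*},b_{i*}$ bundle and amount of $i$'s accepted bid ($\bm 0,0$ if none). A Walrasian equilibrium (on the original items, i.e. with no artificial items) is $(x^*,p)$ with $p\in\mathbb R^J_{\ge0}$, $s_i=b_{i*}-p\,a^{i*}\ge0$ for all $i$, $p\,a^k+s_{i(k)}\ge b_k$ for all bids $k$, and $p_j=0$ for every item in excess supply under $x^*$. *)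

(* Defs.v *)
From HB Require Import structures.
From mathcomp Require Import all_boot all_order all_algebra.
From mathcomp Require Import reals.
Unset Printing Implicit Defensive.
Import Order.TTheory GRing.Theory Num.Theory.
Local Open Scope ring_scope.

Record auction (R : realType) := Auction {
  nJ : nat;
  nI : nat;
  nK : nat;
  supply : 'I_nJ -> nat;
  bidder : 'I_nK -> 'I_nI;
  bundle : 'I_nK -> 'I_nJ -> nat;
  amount : 'I_nK -> R
}.

Arguments nJ {R}. Arguments nI {R}. Arguments nK {R}.
Arguments supply {R}. Arguments bidder {R}. Arguments bundle {R}. Arguments amount {R}.

Section Auction.
Variable (R : realType) (A : auction R).

Definition valid_auction : Prop :=
  [/\ forall j, (1 <= supply A j)%N,
      forall k j, (bundle A k j <= supply A j)%N
    & forall k, 0 <= amount A k].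

Definition feasible (C : {set 'I_(nI A)}) (cs : 'I_(nJ A) -> nat)
  (S : {set 'I_(nK A)}) : bool :=
  [&& [forall k in S, bidder A k \in C],
      [forall j, (\sum_(k in S) bundle A k j <= cs j)%N]
    & [forall i, (#|[set k in S | bidder A k == i]| <= 1)%N]].

Definition value (S : {set 'I_(nK A)}) : R := \sum_(k in S) amount A k.

Definition w (C : {set 'I_(nI A)}) (cs : 'I_(nJ A) -> nat) : R :=
  \big[Num.max/0]_(S : {set 'I_(nK A)} | feasible C cs S) value S.

Definition efficient (S : {set 'I_(nK A)}) : Prop :=
  feasible setT (supply A) S /\ value S = w setT (supply A).

(* bundle a^{i*} and amount b_{i*} of bidder i's accepted bid (0 if none) *)
Definition won_bundle (S : {set 'I_(nK A)}) (i : 'I_(nI A)) (j : 'I_(nJ A)) : nat :=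
  (\sum_(k in S | bidder A k == i) bundle A k j)%N.
Definition won_amount (S : {set 'I_(nK A)}) (i : 'I_(nI A)) : R :=
  \sum_(k in S | bidder A k == i) amount A k.

Definition price_of (p : 'I_(nJ A) -> R) (a : 'I_(nJ A) -> nat) : R :=
  \sum_j p j * (a j)%:R.

Definition surplus (S : {set 'I_(nK A)}) (p : 'I_(nJ A) -> R) (i : 'I_(nI A)) : R :=
  won_amount S i - price_of p (won_bundle S i).

Definition walrasian (S : {set 'I_(nK A)}) (p : 'I_(nJ A) -> R) : Prop :=
  [/\ efficient S,
      forall j, 0 <= p j,
      forall i, 0 <= surplus S p i,
      forall k, amount A k <= price_of p (bundle A k) + surplus S p (bidder A k)
    & forall j, (\sum_(k in S) bundle A k j < supply A j)%N -> p j = 0].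

Definition winning (S : {set 'I_(nK A)}) (i : 'I_(nI A)) : bool :=
  [exists k in S, bidder A k == i].

Definition winning_level (S : {set 'I_(nK A)}) (i : 'I_(nI A)) : R :=
  w [set~ i] (supply A) - w [set~ i] (fun j => supply A j - won_bundle S i j)%N.

End Auction.
Arguments valid_auction {R}. Arguments feasible {R} A. Arguments value {R} A.
Arguments w {R} A. Arguments efficient {R} A. Arguments won_bundle {R} A.
Arguments won_amount {R} A. Arguments price_of {R} A. Arguments surplus {R} A.
Arguments walrasian {R} A. Arguments winning {R} A. Arguments winning_level {R} A.

(* Main.v *)
Require Import Defs.
From HB Require Import structures.
From mathcomp Require Import all_boot all_order all_algebra.
From mathcomp Require Import reals.
From mathcomp Require Import lra.
Import Order.TTheory GRing.Theory Num.Theory.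
Local Open Scope ring_scope.

Definition k0 : 'I_3 := ord0.
Definition k1 : 'I_3 := lift ord0 ord0.
Definition k2 : 'I_3 := lift ord0 (lift ord0 ord0).

Lemma ord3P (k : 'I_3) : [\/ k = k0, k = k1 | k = k2].
Proof.
case: k => [[|[|[|//]]] Hk].
- by constructor 1; apply: val_inj.
- by constructor 2; apply: val_inj.
- by constructor 3; apply: val_inj.
Qed.

Lemma big3 (T : Type) (idx : T) (op : Monoid.com_law idx) (P : pred 'I_3)
  (f : 'I_3 -> T) :
  \big[op/idx]_(k | P k) f k =
  op (if P k0 then f k0 else idx) (op (if P k1 then f k1 else idx)
     (if P k2 then f k2 else idx)).
Proof.
rewrite big_mkcond !big_ord_recl big_ord0 Monoid.mulm1.
by [].
Qed.

Section Ex.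
Variable R : realType.

Definition myA : auction R :=
  @Auction R 1 3 3 (fun _ => 2%N) (fun k => k)
    (fun k _ => if val k == 2%N then 2%N else 1%N)
    (fun k => if val k == 2%N then 3%:R else 2%:R).

Lemma feas_card (C : {set 'I_3}) cs (S : {set 'I_3}) :
  [forall k in S, (k : 'I_3) \in C] ->
  (\sum_(k in S) (if val k == 2%N then 2 else 1) <= cs (ord0 : 'I_1))%N ->
  feasible myA C cs S.
Proof.
move=> HC Hs; apply/and3P; split => //.
  by apply/forallP => j; rewrite (ord1 j).
apply/forallP => i.
rewrite -(cards1 i); apply: subset_leq_card; apply/subsetP => k.
by rewrite !inE => /andP[_ ->].
Qed.

Lemma feasE (C : {set 'I_3}) cs (S : {set 'I_3}) : feasible myA C cs S ->
  [forall k in S, (k : 'I_3) \in C] /\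
  (\sum_(k in S) (if val k == 2%N then 2 else 1) <= cs (ord0 : 'I_1))%N.
Proof. by case/and3P => H1 /forallP H2 _; split => //; apply: H2. Qed.


Lemma valueE (S : {set 'I_3}) : value myA S =
  (if k0 \in S then 2%:R else 0) + ((if k1 \in S then 2%:R else 0) +
  (if k2 \in S then 3%:R else 0)).
Proof. by rewrite /value big3. Qed.

Lemma sumE (S : {set 'I_3}) :
  (\sum_(k in S) (if val k == 2%N then 2 else 1))%N =
  ((if k0 \in S then 1 else 0) + ((if k1 \in S then 1 else 0) +
  (if k2 \in S then 2 else 0)))%N.
Proof. by rewrite big3. Qed.

Lemma wT cs : cs (ord0 : 'I_1) = 2%N -> w myA setT cs = 4%:R.
Proof.
move=> Hc; apply/le_anti/andP; split.
  apply: bigmax_le => [|S /feasE [_]]; first by rewrite ler0n.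
  rewrite sumE valueE Hc.
  by case: (k0 \in S); case: (k1 \in S); case: (k2 \in S) => //= _; lra.
have HF : feasible myA setT cs [set k0; k1].
  apply: feas_card; first by apply/forallP => k; rewrite in_setT implybT.
  by rewrite sumE Hc !inE.
apply: le_trans (le_bigmax_cond _ _ HF).
rewrite valueE !inE /=; lra.
Qed.

Lemma wN2 cs : cs (ord0 : 'I_1) = 2%N -> w myA [set~ k0] cs = 3%:R.
Proof.
move=> Hc; apply/le_anti/andP; split.
  apply: bigmax_le => [|S /feasE [/forallP /(_ k0)]]; first by rewrite ler0n.
  rewrite sumE valueE Hc !inE eqxx /= implybF.
  by case: (k0 \in S); case: (k1 \in S); case: (k2 \in S) => //= _ _; lra.
have HF : feasible myA [set~ k0] cs [set k2].
  apply: feas_card.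
    by apply/forallP => k; apply/implyP; rewrite !inE => /eqP->.
  by rewrite sumE Hc !inE.
apply: le_trans (le_bigmax_cond _ _ HF).
rewrite valueE !inE /=; lra.
Qed.

Lemma wN1 cs : cs (ord0 : 'I_1) = 1%N -> w myA [set~ k0] cs = 2%:R.
Proof.
move=> Hc; apply/le_anti/andP; split.
  apply: bigmax_le => [|S /feasE [/forallP /(_ k0)]]; first by rewrite ler0n.
  rewrite sumE valueE Hc !inE eqxx /= implybF.
  by case: (k0 \in S); case: (k1 \in S); case: (k2 \in S) => //= _ _; lra.
have HF : feasible myA [set~ k0] cs [set k1].
  apply: feas_card.
    by apply/forallP => k; apply/implyP; rewrite !inE => /eqP->.
  by rewrite sumE Hc !inE.
apply: le_trans (le_bigmax_cond _ _ HF).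
rewrite valueE !inE /=; lra.
Qed.


Lemma price1 p a : price_of myA p a = p ord0 * (a ord0)%:R.
Proof. by rewrite /price_of big_ord1. Qed.

End Ex.

Theorem proposition1 (R : realType) :
  exists A : auction R,
    [/\ valid_auction A,
        exists S p, walrasian A S p
      & forall S p, walrasian A S p ->
          exists i, winning A S i /\
            winning_level A S i < price_of A p (won_bundle A S i)].
Proof.
exists (myA R); split.
- split => //= [k j | k]; first by case: (val k == 2%N).
  by case: (val k == 2%N); rewrite ler0n.
- have HF : feasible (myA R) setT (supply (myA R)) [set k0; k1].
    apply: feas_card; first by apply/forallP => k; rewrite in_setT implybT.
    by rewrite sumE !inE.
  exists [set k0; k1], (fun _ => 3%:R / 2%:R); split.
  + split => //; rewrite wT // valueE !inE /=; lra.
  + move=> j; lra.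
  + move=> i; case: (ord3P i) => ->;
      rewrite /surplus /won_amount price1 /won_bundle !big3 !inE /=; lra.
  + move=> k; case: (ord3P k) => ->;
      rewrite /surplus /won_amount !price1 /won_bundle !big3 !inE /=; lra.
  + by move=> j; rewrite (ord1 j) big3 !inE.
- move=> S p [[HF HV] Hp Hs Hk Hex].
  have [_ Hsum] := (@feasE R _ _ _ HF).
  rewrite wT // in HV.
  have /and3P [H0 H1 H2] : [&& k0 \in S, k1 \in S & k2 \notin S].
    move: Hsum HV; rewrite sumE valueE.
    by case: (k0 \in S); case: (k1 \in S); case: (k2 \in S) => //= _ H;
      exfalso; lra.
  have Hwb : won_bundle (myA R) S k0 ord0 = 1%N.
    by rewrite /won_bundle big3 H0 H1 (negbTE H2).
  have Hp2 := Hk k2.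
  rewrite /surplus /won_amount !price1 /won_bundle /= !big3 H0 H1 (negbTE H2) /=
    in Hp2.
  exists k0; split.
    by apply/existsP; exists k0; rewrite H0 eqxx.
  rewrite /winning_level wN2 // wN1; last by rewrite Hwb.
  rewrite price1 Hwb; lra.
Qed.
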